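(* Let $(M,d,+)$ be a metric semigroup, $f:I_a^b\to M$, $0\ne\alpha\le1$, and $x,y\in I_a^b$ with $x\le y$. Then $$\mathrm{md}_{|\alpha|}(f_\alpha^x,I_x^y\lfloor\alpha)\le\sum_{\beta\in\mathbb N_0^n,\ \alpha\le\beta\le1}\mathrm{md}_{|\beta|}\big(f_\beta^a,I_{a+\alpha(x-a)}^{x+\alpha(y-x)}\lfloor\beta\big).$$
   Context: Fix $n\in\mathbb N$ and $a,b\in\mathbb R^n$ with $a<b$. Inequalities between points of $\mathbb R^n$ or multiindices are componentwise ($x\le y$ means $x_i\le y_i$ for all $i$; $x<y$ means $x_i<y_i$ for all $i$). For $x\le y$, $I_x^y=\prod_{i=1}^n[x_i,y_i]$. For $\theta\in\mathbb N_0^n$ and $x\in\mathbb R^n$, $\theta x=(\theta_1x_1,\dots,\theta_nx_n)$ and $|\theta|=\theta_1+\dots+\theta_n$; $0$ and $1$ denote $(0,\dots,0)$ and $(1,\dots,1)$. A multiindex $\theta$ with $0\le\theta\le1$ is even (odd) if $|\theta|$ is even (odd); $\mathcal E(n)$ and $\mathcal O(n)$ are the sets of even and odd $\theta\le1$. A metric semigroup $(M,d,+)$ is a metric space $(M,d)$ with an Abelian semigroup operation $+$ such that $d(u+w,v+w)=d(u,v)$ for all $u,v,w\in M$. For $f:I_a^b\to M$ and $x\le y$ in $I_a^b$, $\mathrm{md}_n(f,I_x^y)=d\big(\sum_{\theta\in\mathcal E(n)}f(x+\theta(y-x)),\sum_{\eta\in\mathcal O(n)}f(x+\eta(y-x))\big)$.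 For $0\ne\alpha\le1$ ($\alpha\in\mathbb N_0^n$) and $x\in\mathbb R^n$ let $x\lfloor\alpha=(x_i:\alpha_i=1)\in\mathbb R^{|\alpha|}$ and $I_x^y\lfloor\alpha=I_{x\lfloor\alpha}^{y\lfloor\alpha}$. For $z\in I_a^b$ the truncated map $f_\alpha^z:I_a^b\lfloor\alpha\to M$ is $f_\alpha^z(x\lfloor\alpha)=f(z+\alpha(x-z))$, $x\in I_a^b$. The quantity $\mathrm{md}_{|\alpha|}(f_\alpha^z,I_x^y\lfloor\alpha)$ is $\mathrm{md}_{|\alpha|}$ (the formula above in dimension $|\alpha|$) for the map $f_\alpha^z$ on the rectangle $I_{x\lfloor\alpha}^{y\lfloor\alpha}\subset\mathbb R^{|\alpha|}$. *)

(* Defs.v *)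
From Stdlib Require Import Reals.
From mathcomp Require Import all_boot.
Set Implicit Arguments. Unset Strict Implicit. Unset Printing Implicit Defensive.

Record metric_semigroup := MetricSemigroup {
  ms_carrier :> Type;
  ms_d : ms_carrier -> ms_carrier -> R;
  ms_add : ms_carrier -> ms_carrier -> ms_carrier;
  ms_d_eq0 : forall u v, ms_d u v = R0 <-> u = v;
  ms_d_sym : forall u v, ms_d u v = ms_d v u;
  ms_d_tri : forall u v w, Rle (ms_d u w) (Rplus (ms_d u v) (ms_d v w));
  ms_addA : forall u v w, ms_add u (ms_add v w) = ms_add (ms_add u v) w;
  ms_addC : forall u v, ms_add u v = ms_add v u;
  ms_d_transl : forall u v w, ms_d (ms_add u w) (ms_add v w) = ms_d u v
}.

Definition pt (k : nat) := 'I_k -> R.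

Definition ple k (x y : pt k) : Prop := forall i, Rle (x i) (y i).
Definition plt k (x y : pt k) : Prop := forall i, Rlt (x i) (y i).
Definition inbox k (a b x : pt k) : Prop := ple a x /\ ple x b.

(* A multiindex theta with 0 <= theta <= 1 is identified with the set of
   coordinates i where theta_i = 1; |theta| = #|theta|.  theta x is the
   componentwise product. *)
Definition pmul k (th : {set 'I_k}) (x : pt k) : pt k :=
  fun i => if i \in th then x i else R0.
Definition padd k (x y : pt k) : pt k := fun i => Rplus (x i) (y i).
Definition psub k (x y : pt k) : pt k := fun i => Rminus (x i) (y i).

(* Iterated semigroup sum over a (possibly empty) finite index range:
   the empty sum is None, a nonempty one is Some of the semigroup sum. *)
Definition oadd (M : metric_semigroup) (u v : option M) : option M :=
  match u, v with
  | Some u', Some v' => Some (ms_add u' v')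
  | Some _, None => u
  | None, _ => v
  end.

Definition odist (M : metric_semigroup) (u v : option M) : R :=
  match u, v with
  | Some u', Some v' => ms_d u' v'
  | _, _ => R0
  end.

Definition md (M : metric_semigroup) (k : nat) (g : pt k -> M) (x y : pt k) : R :=
  odist
    (\big[@oadd M/None]_(th : {set 'I_k} | ~~ odd #|th|)
        Some (g (padd x (pmul th (psub y x)))))
    (\big[@oadd M/None]_(et : {set 'I_k} | odd #|et|)
        Some (g (padd x (pmul et (psub y x))))).

(* Truncation x|alpha = (x_i : alpha_i = 1) in R^{|alpha|}, coordinates
   listed in increasing order of i. *)
Definition trunc n (al : {set 'I_n}) (x : pt n) : pt #|al| :=
  fun j => x (enum_val j).
Arguments trunc {n} al x.

(* Canonical point x of R^n with x|alpha = p and x_i = z_i off alpha. *)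
Definition untrunc n (al : {set 'I_n}) (z : pt n) (p : pt #|al|) : pt n :=
  fun i => match [pick j : 'I_#|al| | enum_val j == i] with
           | Some j => p j
           | None => z i
           end.
Arguments untrunc {n} al z p.

Definition ftrunc (M : metric_semigroup) n (f : pt n -> M) (al : {set 'I_n})
    (z : pt n) : pt #|al| -> M :=
  fun p => f (padd z (pmul al (psub (untrunc al z p) z))).
Arguments ftrunc {M n} f al z.
Arguments md {M k} g x y.

(* Main.v *)
Require Import Defs.
From HB Require Import structures.
From Stdlib Require Import Reals Lra FunctionalExtensionality.
From mathcomp Require Import all_boot.
Set Implicit Arguments. Unset Strict Implicit. Unset Printing Implicit Defensive.

Section S.
Variable M : metric_semigroup.

Lemma oaddA : associative (@oadd M).
Proof. by move=> [u|] [v|] [w|] //=; rewrite ms_addA. Qed.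
Lemma oaddC : commutative (@oadd M).
Proof. by move=> [u|] [v|] //=; rewrite ms_addC. Qed.
Lemma oadd0 : left_id None (@oadd M).
Proof. by case. Qed.
HB.instance Definition _ := Monoid.isComLaw.Build (option M) None (@oadd M) oaddA oaddC oadd0.

Definition Kd (p q : option M) (r : R) : Prop :=
  match p, q with
  | Some p', Some q' => Rle (ms_d p' q') r
  | None, None => Rle R0 r
  | _, _ => False
  end.

Lemma d_add (p1 p2 q1 q2 : M) :
  Rle (ms_d (ms_add p1 p2) (ms_add q1 q2)) (Rplus (ms_d p1 q1) (ms_d p2 q2)).
Proof.
apply: Rle_trans (ms_d_tri _ (ms_add q1 p2) _) _.
rewrite ms_d_transl (ms_addC q1 p2) (ms_addC q1 q2) ms_d_transl; lra.
Qed.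

Lemma d_nonneg (u v : M) : Rle R0 (ms_d u v).
Proof.
have := ms_d_tri u v u; rewrite (ms_d_sym v u).
have [_ ->] := ms_d_eq0 u u => //; lra.
Qed.

Lemma subadd (I : finType) (P : pred I) (A B : I -> option M) :
  (forall i, P i -> exists u v, A i = Some u /\ B i = Some v) ->
  Rle (odist (\big[@oadd M/None]_(i | P i) A i) (\big[@oadd M/None]_(i | P i) B i))
      (\big[Rplus/R0]_(i | P i) odist (A i) (B i)).
Proof.
move=> HS.
have: Kd (\big[@oadd M/None]_(i | P i) A i) (\big[@oadd M/None]_(i | P i) B i)
      (\big[Rplus/R0]_(i | P i) odist (A i) (B i)).
  apply: (big_ind3 Kd).
  - rewrite /Kd; lra.
  - move=> [x1|] [x2|] x3 [y1|] [y2|] y3 //=.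
    + move=> h1 h2; apply: Rle_trans (d_add _ _ _ _) _; lra.
    + move=> h1 h2; lra.
    + move=> h1 h2; lra.
    + move=> h1 h2; lra.
  - move=> i /HS [u [v [-> ->]]] /=; lra.
case: (\big[@oadd M/None]_(i | P i) A i) => [p|]; case: (\big[@oadd M/None]_(i | P i) B i) => [q|] //=.
Qed.

Variable n : nat.
Variable f : pt n -> M.

Definition hT (be : {set 'I_n}) (T : {set 'I_n}) : {set 'I_#|be|} :=
  [set j | enum_val j \in T].

Lemma hT_inv be T : [set enum_val j | j in hT be T] = T :&: be.
Proof.
apply/setP => i; rewrite inE.
apply/imsetP/andP.
- by move=> [j]; rewrite inE => Hj ->; split => //; apply: enum_valP.
- move=> [HT Hb]; exists (enum_rank_in Hb i); rewrite ?inE enum_rankK_in //.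
Qed.

Lemma trunc_reindex (be : {set 'I_n}) (P : nat -> bool) (F : {set 'I_#|be|} -> option M) :
  \big[@oadd M/None]_(th : {set 'I_#|be|} | P #|th|) F th =
  \big[@oadd M/None]_(T : {set 'I_n} | (T \subset be) && P #|T|) F (hT be T).
Proof.
rewrite (reindex_onto (hT be) (fun th => [set enum_val j | j in th])).
  apply: eq_bigl => T; rewrite hT_inv.
  case: (boolP (T \subset be)) => Hs.
    have -> : T :&: be = T by apply/setIidPl.
    rewrite eqxx andbT; congr (P _).
    by rewrite -{2}(setIidPl Hs) -hT_inv card_imset //; apply: enum_val_inj.
  case: (T :&: be =P T) => [E|]; last by rewrite andbF.
  by move: Hs; rewrite -E subsetIr.
move=> th _; apply/setP => j; rewrite inE mem_imset //; apply: enum_val_inj.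
Qed.

Lemma untrunc_in (be : {set 'I_n}) z (p : pt #|be|) i (Hi : i \in be) :
  untrunc be z p i = p (enum_rank_in Hi i).
Proof.
rewrite /untrunc; case: pickP => [j /eqP Hj | H].
  by congr p; apply: enum_val_inj; rewrite enum_rankK_in // Hj.
by move: (H (enum_rank_in Hi i)); rewrite enum_rankK_in // eqxx.
Qed.

Lemma untrunc_out (be : {set 'I_n}) z (p : pt #|be|) i :
  i \notin be -> untrunc be z p i = z i.
Proof.
rewrite /untrunc; case: pickP => [j /eqP Hj | //].
by rewrite -Hj enum_valP.
Qed.

Definition W (be T : {set 'I_n}) (z p q : pt n) : pt n :=
  fun i => if i \in be then (if i \in T then q i else p i) else z i.

Lemma ftrunc_pt be T z p q :
  ftrunc f be z (padd (trunc be p) (pmul (hT be T) (psub (trunc be q) (trunc be p))))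
  = f (W be T z p q).
Proof.
rewrite /ftrunc; congr f; apply: functional_extensionality => i.
rewrite /W /padd /pmul /psub.
case: (boolP (i \in be)) => Hi.
  rewrite (untrunc_in _ _ Hi) /padd /pmul /psub /trunc inE enum_rankK_in //.
  case: (i \in T); rewrite /Rminus; ring.
by rewrite Rplus_0_r.
Qed.

Lemma md_reindex be z p q :
  md (ftrunc f be z) (trunc be p) (trunc be q) =
  odist (\big[@oadd M/None]_(T : {set 'I_n} | (T \subset be) && ~~ odd #|T|) Some (f (W be T z p q)))
        (\big[@oadd M/None]_(T : {set 'I_n} | (T \subset be) && odd #|T|) Some (f (W be T z p q))).
Proof.
rewrite /md; congr odist.
  rewrite (trunc_reindex (fun k => ~~ odd k)); apply: eq_bigr => T _; by rewrite ftrunc_pt.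
rewrite (trunc_reindex odd); apply: eq_bigr => T _; by rewrite ftrunc_pt.
Qed.


Lemma big_some (I : finType) (P : pred I) (F : I -> M) :
  (exists i, P i) -> exists w, \big[@oadd M/None]_(i | P i) Some (F i) = Some w.
Proof.
move=> [i Pi]; rewrite (bigD1 i) //=.
case: (\big[@oadd M/None]_(j | P j && (j != i)) Some (F j)) => [w|] /=; eauto.
Qed.

Lemma odist_sym (p q : option M) : odist p q = odist q p.
Proof. by case: p => [p|]; case: q => [q|] //=; rewrite ms_d_sym. Qed.

Lemma odist_transl (p q c : option M) : p <> None -> q <> None ->
  odist p q = odist (oadd p c) (oadd q c).
Proof.
case: p => [p|] //; case: q => [q|] //; case: c => [c|] //= _ _.
by rewrite ms_d_transl.
Qed.

Variables (a x y : pt n) (al : {set 'I_n}).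
Hypothesis hal : al != set0.

Definition u := padd a (pmul al (psub x a)).
Definition v := padd x (pmul al (psub y x)).
Definition g (T : {set 'I_n}) : pt n := fun i => if i \in T then v i else u i.

Lemma box_pt (be T : {set 'I_n}) : al \subset be -> T \subset be -> W be T a u v = g T.
Proof.
move=> Hab HT; apply: functional_extensionality => i; rewrite /W /g.
case: (boolP (i \in be)) => Hi //.
have -> : (i \in T) = false by apply/negbTE; apply: contra Hi; apply: (subsetP HT).
rewrite /u /padd /pmul.
have -> : (i \in al) = false by apply/negbTE; apply: contra Hi; apply: (subsetP Hab).
by rewrite Rplus_0_r.
Qed.

Lemma lhs_pt (T : {set 'I_n}) : T \subset al -> W al T x x y = g (T :|: ~: al).
Proof.
move=> HT; apply: functional_extensionality => i; rewrite /W /g /u /v /padd /pmul /psub !inE.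
case: (boolP (i \in al)) => Hi /=; rewrite ?orbT ?orbF;
  case: (i \in T) => /=; rewrite /Rminus; ring.
Qed.

Definition GS (be : {set 'I_n}) (s : bool) := \big[@oadd M/None]_(T : {set 'I_n} | (T \subset be) && (odd #|T| == s)) Some (f (g T)).

Lemma GS_some (be : {set 'I_n}) s : al \subset be -> GS be s <> None.
Proof.
move=> Hab.
have [i Hi] : exists i, i \in al by apply/set0Pn.
have [w ->] // : exists w, GS be s = Some w.
apply: big_some; case: s.
  exists [set i]; rewrite cards1 /= andbT sub1set; exact: (subsetP Hab).
by exists set0; rewrite cards0 sub0set.
Qed.

Lemma md_box (be : {set 'I_n}) : al \subset be ->
  md (ftrunc f be a) (trunc be u) (trunc be v) = odist (GS be false) (GS be true).
Proof.
move=> Hab; rewrite md_reindex /GS; congr odist; apply: eq_big => T.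
- by rewrite eqbF_neg.
- by move=> /andP [HT _]; rewrite box_pt.
- by rewrite eqb_id.
- by move=> /andP [HT _]; rewrite box_pt.
Qed.

Definition Full s := \big[@oadd M/None]_(T : {set 'I_n} | (T \subset al) && (odd #|T| == s)) Some (f (g (T :|: ~: al))).

Lemma md_lhs : md (ftrunc f al x) (trunc al x) (trunc al y) = odist (Full false) (Full true).
Proof.
rewrite md_reindex /Full; congr odist; apply: eq_big => T.
- by rewrite eqbF_neg.
- by move=> /andP [HT _]; rewrite lhs_pt.
- by rewrite eqb_id.
- by move=> /andP [HT _]; rewrite lhs_pt.
Qed.

Lemma Full_some s : Full s <> None.
Proof.
have [i Hi] : exists i, i \in al by apply/set0Pn.
have [w ->] // : exists w, Full s = Some w.
apply: big_some; case: s.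
  by exists [set i]; rewrite cards1 /= andbT sub1set.
by exists set0; rewrite cards0 sub0set.
Qed.

Definition L := ({set 'I_n} * {set 'I_n})%type.
Definition valid (l : L) := (al \subset l.1) && (l.2 \subset l.1).
Definition sgn (l : L) := odd (#|l.1| + #|l.2| + #|al|).
Definition full (l : L) := al :|: l.2 == setT.
Definition FL (l : L) := Some (f (g l.2)).
Definition PN s := \big[@oadd M/None]_(l : L | valid l && (sgn l == s)) FL l.

Lemma PN_split s : PN s = \big[@oadd M/None]_(be : {set 'I_n} | al \subset be)
   GS be (odd (#|be| + #|al|) (+) s).
Proof.
rewrite /PN /GS pair_big_dep; apply: eq_bigl => [[be T]] /=.
rewrite /valid /sgn /= -andbA; congr (_ && (_ && _)).
rewrite !oddD; case: (odd #|be|); case: (odd #|T|); case: (odd #|al|); by case: s.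
Qed.


Lemma full_memP (T : {set 'I_n}) : al :|: T == setT -> forall i, (i \in al) || (i \in T).
Proof. by move=> /eqP E i; have := in_setT i; rewrite -E inE. Qed.

Lemma full_part s :
  \big[@oadd M/None]_(l : L | (valid l && (sgn l == s)) && full l) FL l = Full s.
Proof.
rewrite (reindex_onto (fun th : {set 'I_n} => ((setT : {set 'I_n}), th :|: ~: al))
                      (fun l : L => l.2 :&: al)).
  rewrite /Full; apply: eq_bigl => th /=.
  rewrite /valid /sgn /full /= !subsetT /=.
  have -> : al :|: (th :|: ~: al) == setT.
    by apply/eqP/setP => i; rewrite !inE; case: (i \in al); rewrite ?orbT.
  rewrite andbT.
  case: (boolP (th \subset al)) => Hs.
    have -> : (th :|: ~: al) :&: al = th.
      apply/setP => i; rewrite !inE; case: (boolP (i \in th)) => Hi /=.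
        by rewrite (subsetP Hs).
      by case: (i \in al).
    rewrite eqxx andbT.
    have Hd : th :&: ~: al = set0.
      apply/setP => i; rewrite !inE; case: (boolP (i \in th)) => Hi //=.
      by rewrite (subsetP Hs).
    have Hc : #|th :|: ~: al| = #|th| + #|~: al|.
      by rewrite -cardsUI Hd cards0 addn0.
    rewrite Hc cardsT -(cardsC al) !oddD.
    by case: (odd #|al|); case: (odd #|~: al|); case: (odd #|th|); case: s.
  case: ((th :|: ~: al) :&: al =P th) => [E|]; last by rewrite andbF. exfalso; move/negP: Hs; apply; rewrite -E; exact: subsetIr.
move=> [be T] /andP [/andP [/andP [Hab HT] _] Hf] /=.
have Hm := full_memP Hf.
have -> : be = setT.
  apply/setP => i; rewrite inE; case/orP: (Hm i) => Hi.
    exact: (subsetP Hab).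
  exact: (subsetP HT).
congr pair; apply/setP => i; rewrite !inE.
case: (boolP (i \in al)) => Hi; rewrite ?andbT ?andbF ?orbF ?orbT //=.
by have := Hm i; rewrite (negbTE Hi).
Qed.

Definition tog (T be : {set 'I_n}) : {set 'I_n} :=
  if [pick k in ~: (al :|: T)] is Some k then (if k \in be then be :\ k else k |: be) else be.
Definition inv (l : L) : L := (tog l.2 l.1, l.2).

Lemma togK T be : tog T (tog T be) = be.
Proof.
rewrite /tog; case: pickP => [k Hk|] //.
case: (boolP (k \in be)) => Hb.
  by rewrite !inE eqxx /= setD1K.
by rewrite !inE eqxx /= setU1K.
Qed.

Lemma invK : involutive inv.
Proof. by move=> [be T]; rewrite /inv /= togK. Qed.

Lemma sub_tog (A B : {set 'I_n}) k : k \notin A ->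
  (A \subset (if k \in B then B :\ k else k |: B)) = (A \subset B).
Proof.
move=> Hk; case: (boolP (k \in B)) => Hb.
  by rewrite subsetD1 Hk andbT.
apply/subsetP/subsetP => H i Hi.
  have := H i Hi; rewrite in_setU1; case/orP => // /eqP E.
  by subst i; rewrite Hi in Hk.
by rewrite inE H ?orbT.
Qed.

Lemma inv_pred s (l : L) :
  (valid (inv l) && (sgn (inv l) == s)) && ~~ full (inv l) =
  (valid l && (sgn l == ~~ s)) && ~~ full l.
Proof.
case: l => [be T]; rewrite /inv /valid /sgn /full /= /tog.
case: pickP => [k|Hn].
  rewrite !inE negb_or => /andP [Hka HkT].
  rewrite !sub_tog //.
  have Hp : odd #|if k \in be then be :\ k else k |: be| = ~~ odd #|be|.
    case: (boolP (k \in be)) => Hb.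
      by rewrite [in RHS](cardsD1 k be) Hb /= negbK.
    by rewrite cardsU1 Hb.
  rewrite !oddD Hp.
  by case: (odd #|be|); case: (odd #|T|); case: (odd #|al|); case: s; rewrite ?andbF.
have -> : al :|: T == setT.
  apply/eqP/setP => i; rewrite inE; have := Hn i; rewrite !inE negb_or.
  by case: (i \in al); case: (i \in T).
by rewrite !andbF.
Qed.

Lemma D_eq : \big[@oadd M/None]_(l : L | (valid l && (sgn l == false)) && ~~ full l) FL l
           = \big[@oadd M/None]_(l : L | (valid l && (sgn l == true)) && ~~ full l) FL l.
Proof.
rewrite (reindex_inj (can_inj invK)) /=.
by apply: eq_bigl => l; rewrite inv_pred.
Qed.

Lemma main_ineq :
  Rle (md (ftrunc f al x) (trunc al x) (trunc al y))
  (\big[Rplus/R0]_(be : {set 'I_n} | al \subset be) md (ftrunc f be a) (trunc be u) (trunc be v)).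
Proof.
rewrite md_lhs (@odist_transl (Full false) (Full true)
  (\big[@oadd M/None]_(l : L | (valid l && (sgn l == true)) && ~~ full l) FL l)
  (@Full_some false) (@Full_some true)).
rewrite -{1}D_eq -(full_part false) -(full_part true).
rewrite -!bigID -/(PN false) -/(PN true) !PN_split.
eapply Rle_trans.
  apply: subadd => be Hab.
  have [w1 E1] : exists w, GS be (odd (#|be| + #|al|) (+) false) = Some w.
    have := @GS_some be (odd (#|be| + #|al|) (+) false) Hab.
    by case: (GS be (odd (#|be| + #|al|) (+) false)) => [w|] // _; exists w.
  have [w2 E2] : exists w, GS be (odd (#|be| + #|al|) (+) true) = Some w.
    have := @GS_some be (odd (#|be| + #|al|) (+) true) Hab.
    by case: (GS be (odd (#|be| + #|al|) (+) true)) => [w|] // _; exists w.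
  by exists w1, w2.
right; apply: eq_bigr => be Hab; rewrite md_box //.
by rewrite addbF addbT; case: (odd _) => //; rewrite odist_sym.
Qed.

End S.

Theorem lemma2 (M : metric_semigroup) (n : nat) (a b : pt n) (hab : plt a b)
  (f : pt n -> M) (al : {set 'I_n}) (hal : al != set0)
  (x y : pt n) (hx : inbox a b x) (hy : inbox a b y) (hxy : ple x y) :
  Rle (md (ftrunc f al x) (trunc al x) (trunc al y))
  (
   \big[Rplus/R0]_(be : {set 'I_n} | al \subset be)
      md (ftrunc f be a)
         (trunc be (padd a (pmul al (psub x a))))
         (trunc be (padd x (pmul al (psub y x))))).
Proof. exact: (@main_ineq M n f a x y al hal). Qed.
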